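(* Let $n\ge 1$, let $f=(f_1,\dots,f_n):\{0,1\}^n\to\{0,1\}^n$ be a Boolean model, and let $h$ be a multivalued refinement of $f$ on $X=\prod_{j=1}^n\{0,1,\dots,m_j\}$ (with $m_j\ge 1$ integers, at least one $m_j>1$) built by the threshold construction described in the context. Let $J=\{j\in\{1,\dots,n\}: m_j>1\}$ and suppose that no component $g_j$ with $j\in J$ is self-inhibited. Let $a,a'\in\{0,1\}^n$, and let $b,b'\in X$ be obtained from $a$ (resp. $a'$) by replacing, for each $j\in J$, the coordinate $a_j$ (resp. $a'_j$) by $m_j$ whenever it equals $1$ (other coordinates unchanged). If there exists a trajectory from $a$ to $a'$ in the asynchronous state transition graph of $f$, then there exists a trajectory from $b$ to $b'$ in the asynchronous state transition graph of $h$.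
   Context: Components $g_1,\dots,g_n$; a state $x$ gives activity levels $x_j$. Asynchronous dynamics of a map $h:X\to X$ (Boolean or multivalued, $X=\prod_j\{0,\dots,m_j\}$ with $h_j(x)-x_j\in\{-1,0,1\}$): there is a transition $x\to y$ if there is $i_0$ with $x_{i_0}\neq h_{i_0}(x)$, $y_{i_0}=x_{i_0}+\mathrm{sign}(h_{i_0}(x)-x_{i_0})$, and $y_j=x_j$ for $j\ne i_0$. A trajectory is a finite sequence of consecutive transitions. For $x\in X$, $\alpha(x)=\{x'\in\{0,1\}^n:\forall j,\ (x_j=0\Rightarrow x'_j=0)\text{ and }(x_j=m_j\Rightarrow x'_j=1)\}$. A multivalued model $h:X\to X$ (with $h_j(x)-x_j\in\{-1,0,1\}$) is a refinement of $f$ if for all $x\in X$ and $j$: $h_j(x)<x_j\Rightarrow\exists x'\in\alpha(x),\ f_j(x')<x'_j$, and $h_j(x)>x_j\Rightarrow\exists x'\in\alpha(x),\ f_j(x')>x'_j$. Threshold construction: write each $f_{j_0}$ in a shortest disjunctive normal form $f_{j_0}(x)=\bigvee_{h}\bigwedge_{k} w_{j_0,h,k}x_{j_{j_0,h,k}}$, where each $w$ is either empty or negation $\neg$. For each literal with variable index $j=j_{j_0,h,k}$ such that $m_j>1$, choose a threshold $s\in\{0,\dots,m_j-1\}$ and replace the literal $x_j$ by the condition $x_j\ge s+1$ and the literal $\neg x_j$ by $x_j<s+1$ (literals with $m_j=1$ are unchanged). This yields a Boolean-valued function on $X$; set $\mathcal H_{j_0}(x)=+1$ if it is true and $-1$ otherwise,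 and define $h_j(x)=\max(0,\min(m_j,x_j+\mathcal H_j(x)))$. Component $g_j$ is self-inhibited if the literal $\neg x_j$ occurs in the (shortest DNF of) $f_j$. *)

(* Defs.v *)
From mathcomp Require Import all_boot all_order.
Set Implicit Arguments. Unset Strict Implicit. Unset Printing Implicit Defensive.

Section Defs.
Variable n : nat.

Definition bstate := {ffun 'I_n -> bool}.
Definition mstate := {ffun 'I_n -> nat}.

Definition in_X (m : 'I_n -> nat) (x : mstate) : bool := [forall j, x j <= m j].

Definition btrans (f : bstate -> bstate) (x y : bstate) : bool :=
  [exists i0, [&& x i0 != f x i0, y i0 == f x i0 &
               [forall j, (j != i0) ==> (y j == x j)]]].

Definition mtrans (h : mstate -> mstate) (x y : mstate) : bool :=
  [exists i0, [&& x i0 != h x i0,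
               y i0 == (if x i0 < h x i0 then (x i0).+1 else (x i0).-1) &
               [forall j, (j != i0) ==> (y j == x j)]]].

Definition trajectory (S : eqType) (tr : rel S) (x y : S) : Prop :=
  exists s : seq S, path tr x s /\ last x s = y.

(* Boolean DNF: list of clauses, clause = list of literals (j, true) = x_j,
   (j, false) = ~ x_j. *)
Definition literal := ('I_n * bool)%type.
Definition dnf := seq (seq literal).

Definition eval_dnf (D : dnf) (a : bstate) : bool :=
  has (fun c => all (fun l : literal => a l.1 == l.2) c) D.

Definition dnf_size (D : dnf) : nat := sumn (map size D).

Definition shortest_dnf (D : dnf) (g : bstate -> bool) : Prop :=
  (forall a, eval_dnf D a = g a) /\
  (forall D' : dnf, (forall a, eval_dnf D' a = g a) -> dnf_size D <= dnf_size D').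

(* DNF annotated with a threshold s for every literal occurrence *)
Definition tliteral := ('I_n * bool * nat)%type.
Definition tdnf := seq (seq tliteral).

Definition strip (D : tdnf) : dnf := map (map (fun l : tliteral => (l.1.1, l.1.2))) D.

Definition thresholds_ok (m : 'I_n -> nat) (D : tdnf) : bool :=
  all (fun c => all (fun l : tliteral => (1 < m l.1.1) ==> (l.2 < m l.1.1)) c) D.

Definition eval_tlit (m : 'I_n -> nat) (x : mstate) (l : tliteral) : bool :=
  let: (j, pos, s) := l in
  if 1 < m j then (if pos then s.+1 <= x j else x j < s.+1)
  else (if pos then x j == 1 else x j == 0).

Definition eval_tdnf (m : 'I_n -> nat) (D : tdnf) (x : mstate) : bool :=
  has (fun c => all (eval_tlit m x) c) D.

(* h_j(x) = max(0, min(m_j, x_j + H_j(x))), H_j = +1 if true, -1 otherwise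
   (natural-number truncated predecessor realizes max(0, .)) *)
Definition threshold_model (m : 'I_n -> nat) (D : 'I_n -> tdnf) (x : mstate) : mstate :=
  [ffun j => if eval_tdnf m (D j) x then minn (m j) (x j).+1
             else minn (m j) (x j).-1].

Definition in_alpha (m : 'I_n -> nat) (x : mstate) (x' : bstate) : bool :=
  [forall j, ((x j == 0) ==> ~~ x' j) && ((x j == m j) ==> x' j)].

Definition refinement (m : 'I_n -> nat) (f : bstate -> bstate) (h : mstate -> mstate) : Prop :=
  forall x : mstate, in_X m x -> forall j : 'I_n,
    (h x j < x j -> exists x' : bstate, in_alpha m x x' /\ f x' j < x' j) /\
    (h x j > x j -> exists x' : bstate, in_alpha m x x' /\ f x' j > x' j).

Definition self_inhibited (D : dnf) (j : 'I_n) : bool :=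
  has (fun c => (j, false) \in c) D.

Definition lift_state (m : 'I_n -> nat) (a : bstate) : mstate :=
  [ffun j => if a j then (if 1 < m j then m j else 1) else 0].

End Defs.

(* Main.v *)
Require Import Defs.
From mathcomp Require Import all_boot all_order.
From mathcomp Require Import zify.
Set Implicit Arguments. Unset Strict Implicit. Unset Printing Implicit Defensive.

Section Aux.
Variable n : nat.
Variable m : 'I_n -> nat.
Hypothesis m1 : forall j, 1 <= m j.
Variable f : bstate n -> bstate n.
Variable D : 'I_n -> tdnf n.
Hypothesis Hdnf : forall j0 a, eval_dnf (strip (D j0)) a = f a j0.
Hypothesis Hthr : forall j0, thresholds_ok m (D j0).
Hypothesis Hself : forall j, 1 < m j -> ~~ self_inhibited (strip (D j)) j.

Definition setc (x : mstate n) (i : 'I_n) (k : nat) : mstate n :=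
  [ffun j => if j == i then k else x j].

Lemma evalK (a : bstate n) (l : tliteral n) :
  ((1 < m l.1.1) ==> (l.2 < m l.1.1)) ->
  eval_tlit m (lift_state m a) l = (a l.1.1 == l.1.2).
Proof.
case: l => [[j pos] s] /= H; rewrite ffunE.
have := m1 j.
case: (ltnP 1 (m j)) => Hm /=.
- rewrite Hm /= in H.
  by case: (a j); case: pos => /=; lia.
- by case: (a j); case: pos => /=; lia.
Qed.

Lemma eval_agree (x y : mstate n) (l : tliteral n) :
  x l.1.1 = y l.1.1 -> eval_tlit m x l = eval_tlit m y l.
Proof. by case: l => [[j pos] s] /= ->. Qed.

Lemma lit_ok (a : bstate n) (i : 'I_n) (k : nat) (c : seq (tliteral n)) (l : tliteral n) : c \in D i -> l \in c ->
  (1 < m i \/ k = lift_state m a i) ->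
  eval_tlit m (setc (lift_state m a) i k) l = (a l.1.1 == l.1.2)
  \/ (l.1.1 = i /\ l.1.2 = true /\ 1 < m i).
Proof.
move=> cin lin Hk.
have Hl : (1 < m l.1.1) ==> (l.2 < m l.1.1).
  by have := Hthr i => /allP /(_ c cin) /allP /(_ l lin).
case: (eqVneq l.1.1 i) => E.
- case: Hk => [Hm | Hk].
  + case E2: l.1.2; first by right.
    exfalso. move: (Hself Hm) => /negP; apply.
    apply/hasP; exists (map (fun l : tliteral n => (l.1.1, l.1.2)) c).
      by apply/mapP; exists c.
    apply/mapP; exists l => //. by rewrite E E2.
  + left; rewrite -evalK //; apply: eval_agree; by rewrite ffunE E eqxx.
- left; rewrite -evalK //; apply: eval_agree; by rewrite ffunE (negbTE E).
Qed.

Lemma up (a : bstate n) (i : 'I_n) (k : nat) : a i = false -> f a i = true -> k < m i ->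
  eval_tdnf m (D i) (setc (lift_state m a) i k).
Proof.
move=> Ha Hf Hk.
have := Hdnf i a; rewrite Hf => /hasP [c' /mapP [c cin ->]] /allP Hc.
apply/hasP; exists c => //; apply/allP => l lin.
have Hl : a l.1.1 == l.1.2.
  by have := Hc _ (map_f (fun l : tliteral n => (l.1.1, l.1.2)) lin).
have Hk' : 1 < m i \/ k = lift_state m a i.
  case: (ltnP 1 (m i)) => Hm; first by left.
  right; rewrite ffunE Ha; have := m1 i; lia.
case: (lit_ok cin lin Hk') => [-> // | [E1 [E2 _]]].
by move: Hl; rewrite E1 E2 Ha.
Qed.

Lemma down (a : bstate n) (i : 'I_n) (k : nat) : a i = true -> f a i = false -> 0 < k <= m i ->
  eval_tdnf m (D i) (setc (lift_state m a) i k) = false.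
Proof.
move=> Ha Hf Hk.
apply/negbTE/negP => /hasP [c cin /allP Hc].
have Hk' : 1 < m i \/ k = lift_state m a i.
  case: (ltnP 1 (m i)) => Hm; first by left.
  right; rewrite ffunE Ha (ltnNge 1 (m i)) Hm /=; have := m1 i; lia.
have : eval_dnf (strip (D i)) a.
  apply/hasP; exists (map (fun l : tliteral n => (l.1.1, l.1.2)) c).
    by apply/mapP; exists c.
  apply/allP => l' /mapP [l lin ->] /=.
  case: (lit_ok cin lin Hk') => [<- | [E1 [E2 _]]]; first exact: Hc.
  by rewrite E1 E2 Ha.
by rewrite Hdnf Hf.
Qed.

Lemma traj_refl (S : eqType) (tr : rel S) x : trajectory tr x x.
Proof. by exists [::]. Qed.

Lemma traj_snoc (S : eqType) (tr : rel S) x y z :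
  trajectory tr x y -> tr y z -> trajectory tr x z.
Proof.
move=> [s [Hp Hl]] Hyz; exists (rcons s z).
by rewrite rcons_path last_rcons Hp Hl Hyz.
Qed.

Lemma traj_trans (S : eqType) (tr : rel S) x y z :
  trajectory tr x y -> trajectory tr y z -> trajectory tr x z.
Proof.
move=> [s1 [Hp1 Hl1]] [s2 [Hp2 Hl2]]; exists (s1 ++ s2).
by rewrite cat_path last_cat Hp1 Hl1 Hp2 Hl2.
Qed.

Lemma setc_same (x : mstate n) i : setc x i (x i) = x.
Proof. by apply/ffunP => j; rewrite ffunE; case: eqVneq => // ->. Qed.

Lemma mstep_up (a : bstate n) (i : 'I_n) (k : nat) : a i = false -> f a i = true -> k < m i ->
  mtrans (threshold_model m D) (setc (lift_state m a) i k)
         (setc (lift_state m a) i k.+1).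
Proof.
move=> Ha Hf Hk; apply/existsP; exists i.
rewrite /threshold_model !ffunE eqxx (up Ha Hf Hk).
have -> : minn (m i) k.+1 = k.+1 by apply/minn_idPr.
rewrite ltnSn eqxx; apply/and3P; split => //; first lia.
apply/forallP => j; apply/implyP => /negbTE ne; by rewrite !ffunE ne.
Qed.

Lemma mstep_down (a : bstate n) (i : 'I_n) (k : nat) : a i = true -> f a i = false -> 0 < k <= m i ->
  mtrans (threshold_model m D) (setc (lift_state m a) i k)
         (setc (lift_state m a) i k.-1).
Proof.
move=> Ha Hf Hk; apply/existsP; exists i.
rewrite /threshold_model !ffunE eqxx (down Ha Hf Hk).
have -> : minn (m i) k.-1 = k.-1 by apply/minn_idPr; lia.
have -> : (k < k.-1) = false by lia.
rewrite eqxx; apply/and3P; split => //; first lia.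
apply/forallP => j; apply/implyP => /negbTE ne; by rewrite !ffunE ne.
Qed.

Lemma bstep (a a' : bstate n) : btrans f a a' ->
  trajectory (mtrans (threshold_model m D)) (lift_state m a) (lift_state m a').
Proof.
move=> /existsP [i /and3P [Hne /eqP Ha'i /forallP Hoth]].
have Hoth' : forall j, j != i -> a' j = a j.
  by move=> j ne; apply/eqP; move/implyP: (Hoth j); apply.
case Ha: (a i).
- have Hf : f a i = false by move: Hne; rewrite Ha; case: (f a i).
  have Hall : forall k, k <= m i -> trajectory (mtrans (threshold_model m D))
      (lift_state m a) (setc (lift_state m a) i (m i - k)).
    elim => [_ | k IH Hk].
      rewrite subn0.
      have -> : m i = lift_state m a i.
        by rewrite ffunE Ha; have := m1 i; case: (ltnP 1 (m i)) => // H1 H2; lia.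
      rewrite setc_same; exact: traj_refl.
    apply: traj_snoc (IH (ltnW Hk)) _.
    have -> : m i - k.+1 = (m i - k).-1 by lia.
    apply: mstep_down => //; lia.
  have := Hall _ (leqnn (m i)); rewrite subnn.
  suff -> : lift_state m a' = setc (lift_state m a) i 0 by [].
  apply/ffunP => j; rewrite !ffunE; case: eqVneq => [-> | ne].
    by rewrite Ha'i Hf.
  by rewrite Hoth'.
- have Hf : f a i = true by move: Hne; rewrite Ha; case: (f a i).
  have Hall : forall k, k <= m i -> trajectory (mtrans (threshold_model m D))
      (lift_state m a) (setc (lift_state m a) i k).
    elim => [_ | k IH Hk].
      have -> : 0 = lift_state m a i by rewrite ffunE Ha.
      rewrite setc_same; exact: traj_refl.
    apply: traj_snoc (IH (ltnW Hk)) _.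
    exact: mstep_up.
  have := Hall _ (leqnn (m i)).
  suff -> : lift_state m a' = setc (lift_state m a) i (m i) by [].
  apply/ffunP => j; rewrite !ffunE; case: eqVneq => [-> | ne].
    rewrite Ha'i Hf; have := m1 i; case: (ltnP 1 (m i)) => // H1 H2; lia.
  by rewrite Hoth'.
Qed.

End Aux.

Theorem proposition1 (n : nat) (m : 'I_n -> nat) (f : bstate n -> bstate n)
    (D : 'I_n -> tdnf n) :
  0 < n ->
  (forall j, 1 <= m j) ->
  (exists j, 1 < m j) ->
  (forall j0, shortest_dnf (strip (D j0)) (fun a => f a j0)) ->
  (forall j0, thresholds_ok m (D j0)) ->
  refinement m f (threshold_model m D) ->
  (forall j, 1 < m j -> ~~ self_inhibited (strip (D j)) j) ->
  forall a a' : bstate n,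
    trajectory (btrans f) a a' ->
    trajectory (mtrans (threshold_model m D)) (lift_state m a) (lift_state m a').
Proof.
move=> _ m1 _ Hsh Hthr _ Hself a a' [s [Hp Hl]].
have Hdnf : forall j0 a, eval_dnf (strip (D j0)) a = f a j0.
  by move=> j0 b; case: (Hsh j0) => H _; apply: H.
elim: s a Hp Hl => [| b s IH] a0 /=.
  by move=> _ ->; exact: traj_refl.
move=> /andP [Hab Hp] Hl.
apply: traj_trans (bstep m1 Hdnf Hthr Hself Hab) (IH _ Hp Hl).
Qed.
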